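(* Let $G$ be a nontrivial finite abelian $p$-group of rank $n$ with $n\le p-1$. Then $\tau(G)=n+1$.
   Context: The rank is the minimal number of generators. A projective representation of $G$ is an $\alpha$-representation for some cocycle $\alpha\in Z^2(G,\mathbb{C}^\times)$: a map $\rho:G\to\mathrm{GL}_m(\mathbb{C})$ with $\rho(1)=I$ and $\rho(g)\rho(h)=\alpha(g,h)\rho(gh)$; it is faithful if the only $g$ with $\rho(g)$ scalar is $g=1$. $\tau(G)$ is the least degree of a faithful projective representation of $G$. *)

(* Defs.v *)
From mathcomp Require Import all_boot all_algebra all_fingroup.
From mathcomp Require Import Rstruct complex.
Set Implicit Arguments. Unset Strict Implicit. Unset Printing Implicit Defensive.
Import GRing.Theory Num.Theory.

Definition CC : numClosedFieldType := complex Rdefinitions.R.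

Local Open Scope ring_scope.

Section Defs.
Variable gT : finGroupType.

Definition generates (G : {set gT}) (s : seq gT) : Prop :=
  <<[set x in s]>>%g = G.

Definition has_rank (G : {set gT}) (n : nat) : Prop :=
  (exists s : seq gT, size s = n /\ generates G s) /\
  (forall s : seq gT, generates G s -> (n <= size s)%N).

Definition is_cocycle (G : {set gT}) (alpha : gT -> gT -> CC) : Prop :=
  {in G &, forall g h, alpha g h != 0} /\
  {in G & G & G, forall g h k,
     alpha g h * alpha (g * h)%g k = alpha h k * alpha g (h * k)%g}.

Definition is_alpha_rep (G : {set gT}) (m : nat) (alpha : gT -> gT -> CC)
    (rho : gT -> 'M[CC]_m) : Prop :=
  rho 1%g = 1%:M /\
  {in G, forall g, rho g \in unitmx} /\
  {in G &, forall g h, rho g *m rho h = alpha g h *: rho (g * h)%g}.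

Definition is_proj_rep (G : {set gT}) (m : nat) (rho : gT -> 'M[CC]_m) : Prop :=
  exists alpha, is_cocycle G alpha /\ is_alpha_rep G alpha rho.

Definition proj_faithful (G : {set gT}) (m : nat) (rho : gT -> 'M[CC]_m) : Prop :=
  {in G, forall g, is_scalar_mx (rho g) -> g = 1%g}.

Definition tau_eq (G : {set gT}) (t : nat) : Prop :=
  (exists rho : gT -> 'M[CC]_t, is_proj_rep G rho /\ proj_faithful G rho) /\
  (forall (m : nat) (rho : gT -> 'M[CC]_m),
     is_proj_rep G rho -> proj_faithful G rho -> (t <= m)%N).

End Defs.

(* Main.v *)
Require Import Defs.
From mathcomp Require Import all_boot all_algebra all_fingroup all_solvable all_field.
From mathcomp Require Import ring.
Set Implicit Arguments. Unset Strict Implicit. Unset Printing Implicit Defensive.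
Import GRing.Theory Num.Theory.
Local Open Scope ring_scope.

Lemma CC_prim_root n : (n > 0)%N -> {z : CC | n.-primitive_root z}.
Proof.
pose p : {poly CC} := 'X^n - 1; have [r Dp] := closed_field_poly_normal p.
move=> n_gt0; apply/sigW; rewrite (monicP _) ?monicXnsubC // scale1r in Dp.
have rn1: all n.-unity_root r by apply/allP=> z; rewrite -root_prod_XsubC -Dp.
have sz_r: (n < (size r).+1)%N.
  by rewrite -(size_prod_XsubC r id) -Dp size_XnsubC.
have [|z] := hasP (has_prim_root n_gt0 rn1 _ sz_r); last by exists z.
by rewrite -separable_prod_XsubC -Dp separable_Xn_sub_1 // pnatr_eq0 -lt0n.
Qed.

Lemma diag_pow1 m (B : 'M[CC]_m.+1) N : (N > 0)%N ->
  B ^+ N = 1 -> exists2 rs : seq CC, uniq rs & mxminpoly B %| \prod_(x <- rs) ('X - x%:P).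
Proof.
move=> N0 BN.
pose p : {poly CC} := 'X^N - 1; have [r Dp] := closed_field_poly_normal p.
rewrite (monicP _) ?monicXnsubC // scale1r in Dp.
exists r.
  by rewrite -separable_prod_XsubC -Dp separable_Xn_sub_1 // pnatr_eq0 -lt0n.
rewrite -Dp; apply: mxminpoly_min.
rewrite /p rmorphB /= rmorphXn /= horner_mx_X BN.
by rewrite rmorph1 subrr.
Qed.


Lemma scale_diag m (P A : 'M[CC]_m) (d : CC) :
  is_diag_mx (conjmx P A) -> is_diag_mx (conjmx P (d *: A)).
Proof.
have -> : conjmx P (d *: A) = d *: conjmx P A.
  by rewrite /conjmx -scalemxAr -scalemxAl.
move=> /is_diag_mxP H; apply/is_diag_mxP => i j ij.
by rewrite mxE H // mulr0.
Qed.

Lemma diag_pow m (A : 'M[CC]_m.+1) N (c : CC) : (N > 0)%N -> c != 0 ->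
  A ^+ N = c%:M -> exists2 P, P \in unitmx & is_diag_mx (conjmx P A).
Proof.
move=> N0 c0 AN.
pose d := N.-root c.
have dN : d ^+ N = c by rewrite /d rootCK.
have d0 : d != 0 by apply: contraNneq c0 => d0; rewrite -dN d0 expr0n eqn0Ngt N0.
have [B defB] : {B : 'M[CC]_m.+1 | B = d^-1 *: A} by exists (d^-1 *: A).
have BN : B ^+ N = 1.
  by rewrite defB exprZn AN exprVn dN scale_scalar_mx mulVf.
have H1 := diag_pow1 N0 BN.
have H2 := @diagonalizableP CC m B.
have [P Pu PB] := H2.2 H1.
exists P; first exact: Pu.
have -> : A = d *: B by rewrite defB scalerA mulfV // scale1r.
exact: scale_diag.
Qed.

Lemma rank_eq (gT : finGroupType) (G : {group gT}) n :
  abelian G -> has_rank G n -> n = 'r(G)%g.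
Proof.
move=> cGG [[s [sz gen]] mn]; rewrite -grank_abelian //.
apply/eqP; rewrite eqn_leq; apply/andP; split.
  have [B defB cB] := grank_witness G.
  rewrite -cB cardE; apply: mn; rewrite /generates.
  by rewrite (_ : [set x in enum B] = B) // ; apply/setP=> x; rewrite inE mem_enum.
have := grank_min [set x in s]; rewrite gen -sz => /leq_trans; apply.
by rewrite cardsE card_size.
Qed.

Section Cyc.
Variables (gT : finGroupType) (a : gT).

Definition cyc_exp (y : gT) := index y (mkseq (fun k => (a ^+ k)%g) #[a]%g).

Lemma cyc_expP k : (a ^+ cyc_exp (a ^+ k) = a ^+ k)%g /\ (cyc_exp (a ^+ k) < #[a]%g)%N.
Proof.
have ins : (a ^+ k)%g \in mkseq (fun k => (a ^+ k)%g) #[a]%g.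
  rewrite -expg_mod_order; apply/mapP; exists (k %% #[a]%g)%N => //.
  by rewrite mem_iota add0n ltn_mod order_gt0.
have := nth_index 1%g ins; rewrite -/(cyc_exp _) => e.
have lt : (cyc_exp (a ^+ k) < #[a]%g)%N.
  by rewrite /cyc_exp -[X in (_ < X)%N](size_mkseq (fun k => (a ^+ k)%g)) index_mem.
split=> //; move: e; rewrite nth_mkseq //.
Qed.

Variable z : CC.
Hypothesis zP : #[a]%g.-primitive_root z.

Definition cyc_chi (y : gT) := z ^+ cyc_exp y.

Lemma cyc_chiE k : cyc_chi (a ^+ k)%g = z ^+ k.
Proof.
have [e _] := cyc_expP k; apply/eqP; rewrite /cyc_chi (eq_prim_root_expr zP).
by rewrite -eq_expg_mod_order e.
Qed.

Lemma cyc_chiM : {in <[a]>%g &, {morph cyc_chi : x y / (x * y)%g >-> x * y}}.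
Proof.
move=> x y /cycleP[i ->] /cycleP[j ->]; by rewrite -expgD !cyc_chiE exprD.
Qed.

Lemma cyc_chi_neq0 y : cyc_chi y != 0.
Proof.
rewrite /cyc_chi expf_neq0 //; apply/negP => /eqP z0.
move: (prim_expr_order zP); rewrite z0 expr0n gtn_eqF ?order_gt0 // => /eqP.
by rewrite eq_sym oner_eq0.
Qed.

Lemma cyc_chi_ker y : y \in <[a]>%g -> cyc_chi y = 1 -> y = 1%g.
Proof.
case/cycleP=> k ->; rewrite cyc_chiE => /eqP.
rewrite -(prim_order_dvd zP) order_dvdn => /eqP //.
Qed.
End Cyc.

Lemma chars_exist (gT : finGroupType) (b : seq gT) (G : {group gT}) :
  (\big[dprod/1]_(x <- b) <[x]>)%g = G ->
  exists F : 'I_(size b) -> gT -> CC,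
    [/\ forall i, {in G &, {morph F i : x y / (x * y)%g >-> x * y}},
        forall i x, F i x != 0 &
        {in G, forall x, (forall i, F i x = 1) -> x = 1%g}].
Proof.
elim: b G => [|a b IH] G.
  rewrite big_nil => <-; exists (fun _ _ => 1); split=> //.
  - by move=> _ x y _ _; rewrite mulr1.
  - by move=> _ _; rewrite oner_eq0.
  by move=> x /set1gP.
rewrite big_cons => defG.
case/dprodP: (defG) => [[K H defK defH] KH cKH tiKH].
rewrite defK defH in KH cKH tiKH defG.
have [F [FM F0 Fk]] := IH H defH.
have [z zP] := CC_prim_root (order_gt0 a).
have cpl : H \in [complements to K in G]%g by apply/complP; split.
have nKG : (K <| G)%g.
  by have [] := dprod_normal2 defG.
exists (fun i x => if unlift ord0 i is Some j then F j (remgr K H x)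
                 else cyc_chi a z (divgr K H x)); split.
- move=> i x y Gx Gy; case: (unlift ord0 i) => [j|] /=.
    rewrite (remgrM cpl nKG) //; apply: FM; rewrite mem_remgr // KH //.
  rewrite (divgrM cpl cKH) //; apply: cyc_chiM => //; rewrite defK mem_divgr // KH //.
- by move=> i x; case: (unlift ord0 i) => [j|] /=; [apply: F0 | apply: cyc_chi_neq0].
move=> x Gx xk.
have d1 : divgr K H x = 1%g.
  apply: (cyc_chi_ker zP); first by rewrite defK mem_divgr // KH.
  by have := xk ord0; rewrite unlift_none.
have r1 : remgr K H x = 1%g.
  apply: Fk; first by rewrite mem_remgr // KH.
  by move=> j; have := xk (lift ord0 j); rewrite liftK.
by rewrite (divgr_eq K H x) d1 r1 mulg1.
Qed.

Lemma upper (gT : finGroupType) (G : {group gT}) k (F : 'I_k -> gT -> CC) :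
  (forall i, {in G &, {morph F i : x y / (x * y)%g >-> x * y}}) ->
  (forall i x, F i x != 0) ->
  {in G, forall x, (forall i, F i x = 1) -> x = 1%g} ->
  exists rho : gT -> 'M[CC]_k.+1, is_proj_rep G rho /\ proj_faithful G rho.
Proof.
move=> FM F0 Fk.
pose d x : 'rV[CC]_k.+1 := \row_(i < k.+1) if unlift ord0 i is Some j then F j x else 1.
pose rho x := diag_mx (d x).
have F1 i : F i 1%g = 1.
  have := FM i 1%g 1%g (group1 G) (group1 G); rewrite mulg1 => e.
  by apply: (mulfI (F0 i 1%g)); rewrite -e mulr1.
have rhoM : {in G &, forall x y, rho x *m rho y = rho (x * y)%g}.
  move=> x y Gx Gy; apply/matrixP => i j; rewrite mul_diag_mx !mxE.
  case: eqP => _ /=; last by rewrite !mulr0n mulr0.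
  by rewrite !mulr1n; case: (unlift ord0 i) => [l|] //=; rewrite ?FM ?mulr1.
have rho1 : rho 1%g = 1%:M.
  rewrite /rho -diag_const_mx; congr diag_mx; apply/matrixP => i j.
  by rewrite !mxE; case: (unlift ord0 j) => [l|] //=.
exists rho; split.
  exists (fun _ _ => 1); split.
    by split; [move=> ? ? _ _; rewrite oner_eq0 | move=> ? ? ? _ _ _; rewrite mulr1].
  split; first exact: rho1.
  split; last by move=> x y Gx Gy; rewrite scale1r rhoM.
  move=> x Gx; have := rhoM x x^-1%g Gx (groupVr Gx).
  by rewrite mulgV rho1 => /mulmx1_unit [].
move=> x Gx /is_scalar_mxP [a ea]; apply: Fk => // i.
have e0 := congr1 (fun M : 'M_k.+1 => M ord0 ord0) ea.
have ei := congr1 (fun M : 'M_k.+1 => M (lift ord0 i) (lift ord0 i)) ea.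
move: e0 ei; rewrite /= /rho !mxE !eqxx /= !mulr1n unlift_none liftK => <- //.
Qed.

Section Lower.
Variables (gT : finGroupType) (G : {group gT}) (m : nat) (alpha : gT -> gT -> CC)
  (rho : gT -> 'M[CC]_m.+1).
Hypotheses (coc : is_cocycle G alpha) (rep : is_alpha_rep G alpha rho).

Lemma rho_pow g : g \in G -> forall k, exists2 c, c != 0 & rho g ^+ k = c *: rho (g ^+ k)%g.
Proof.
case: coc => a0 _; case: rep => r1 [ru rM] Gg.
elim=> [|k [c c0 IH]].
  by exists 1; rewrite ?oner_eq0 // expr0 expg0 r1 scale1r.
exists (c * alpha (g ^+ k)%g g); first by rewrite mulf_neq0 // a0 // groupX.
rewrite exprSr IH expgSr -scalerA -rM ?groupX // -mulmxE.
by rewrite scalemxAl.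
Qed.

Lemma rho_ord g : g \in G -> exists2 c, c != 0 & rho g ^+ #[g]%g = c%:M.
Proof.
move=> Gg; have [c c0 e] := rho_pow Gg #[g]%g.
exists c => //; rewrite e expg_order; case: rep => -> _.
by rewrite scale_scalar_mx mulr1.
Qed.

Lemma caseA (p : nat) g h : prime p -> (p.-group G)%g -> abelian G ->
  g \in G -> h \in G -> alpha g h != alpha h g -> (p %| m.+1)%N.
Proof.
move=> pp pG cGG Gg Gh ne.
case: coc => a0 _; case: rep => r1 [ru rM].
pose w := alpha g h / alpha h g.
have ah0 : alpha h g != 0 by apply: a0.
have w1 : w != 1.
  by apply: contra ne; rewrite /w => /eqP/(canRL (divfK ah0)); rewrite mul1r => ->.
have AB : rho g *m rho h = w *: (rho h *m rho g).
  rewrite !rM // scalerA /w divfK // (centsP cGG g Gg h Gh).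
  done.
have detu x : x \in G -> \det (rho x) != 0.
  by move=> Gx; have := ru x Gx; rewrite unitmxE unitfE.
have wm : w ^+ m.+1 = 1.
  have := congr1 determinant AB; rewrite detZ !det_mulmx [X in _ = _ * X]mulrC.
  move/eqP; rewrite -subr_eq0 -{1}[_ * _]mul1r -mulrBl mulf_eq0 mulf_eq0.
  rewrite (negPf (detu g Gg)) (negPf (detu h Gh)) !orbF subr_eq0.
  by move/eqP/esym.
have AB' : rho g * rho h = w *: (rho h * rho g) by rewrite -!mulmxE.
have AkB k : rho g ^+ k * rho h = w ^+ k *: (rho h * rho g ^+ k).
  elim: k => [|k IH]; first by rewrite !expr0 mul1r mulr1 scale1r.
  rewrite exprS -mulrA IH -scalerAr (mulrA (rho g)) AB' -scalerAl.
  by rewrite scalerA -exprSr mulrA.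
have wN : w ^+ #[g]%g = 1.
  have [c c0 e] := rho_ord Gg.
  have := AkB #[g]%g; rewrite e -!mulmxE mul_scalar_mx mul_mx_scalar scalerA => /eqP.
  rewrite -subr_eq0 -scalerBl scaler_eq0 => /orP[|].
    rewrite -{1}[c]mul1r -mulrBl mulf_eq0 (negPf c0) orbF subr_eq0.
    by move/eqP <-.
  move=> /eqP h0; have := detu h Gh; rewrite h0 det0 eqxx //.
have [d dP dN] := prim_order_exists (order_gt0 g) wN.
have [k ek] := p_natP (mem_p_elt pG Gg).
rewrite ek in dN; have [j _ dj] := (dvdn_pfactor _ _ pp dN).
have dm : (d %| m.+1)%N by rewrite (prim_order_dvd dP) wm.
case: j dj => [|j] dj.
  by move: w1; rewrite -(prim_expr_order dP) dj expr1 eqxx.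
by apply: dvdn_trans dm; rewrite dj dvdn_exp.
Qed.

Lemma caseB (p : nat) : prime p -> (p.-group G)%g -> abelian G ->
  proj_faithful G rho ->
  {in G &, forall g h, alpha g h = alpha h g} -> ('r_p(G)%g <= m)%N.
Proof.
move=> pp pG cGG faith asym.
case: coc => a0 _; case: rep => r1 [ru rM].
pose fs := [seq rho x | x <- enum G].
have [P Pu Pfs] : exists2 P : 'M[CC]_m.+1, P \in unitmx & all [pred A | similar_diag P A] fs.
  apply/(codiagonalizableP fs); split.
    move=> _ _ /mapP[x Gx ->] /mapP[y Gy ->]; rewrite mem_enum in Gx; rewrite mem_enum in Gy.
    by rewrite /comm_mx (rM x y) // (rM y x) // asym // (centsP cGG x Gx y Gy).
  move=> _ /mapP[x Gx ->]; rewrite mem_enum in Gx.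
  have [c c0 e] := rho_ord Gx.
  exact: diag_pow (order_gt0 x) c0 e.
pose D x := P *m rho x *m invmx P.
have Ddiag x : x \in G -> is_diag_mx (D x).
  move=> Gx; have := allP Pfs (rho x) (map_f _ _); rewrite mem_enum => /(_ Gx).
  by rewrite /= /similar_to conjumx.
have DM x y : x \in G -> y \in G -> D x *m D y = alpha x y *: D (x * y)%g.
  move=> Gx Gy; rewrite /D !mulmxA mulmxKV // -(mulmxA P) rM //.
  by rewrite -scalemxAr -scalemxAl.
have D1 : D 1%g = 1%:M by rewrite /D r1 mulmx1 mulmxV.
pose lam i x := D x i i.
have lamM i x y : x \in G -> y \in G -> lam i x * lam i y = alpha x y * lam i (x * y)%g.
  move=> Gx Gy; have := congr1 (fun M : 'M_m.+1 => M i i) (DM x y Gx Gy).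
  case/diag_mxP: (Ddiag x Gx) => dx ex; case/diag_mxP: (Ddiag y Gy) => dy ey.
  rewrite /lam ex ey /= mul_diag_mx !mxE eqxx !mulr1n => ->.
  by [].
have lam1 i : lam i 1%g = 1 by rewrite /lam D1 mxE eqxx.
have lam0 i x : x \in G -> lam i x != 0.
  move=> Gx; have := lamM i x x^-1%g Gx (groupVr Gx); rewrite mulgV lam1 mulr1 => e.
  apply/negP => /eqP l0; move: (a0 x x^-1%g Gx (groupVr Gx)).
  by rewrite -e l0 mul0r eqxx.
pose mu j x := lam (lift ord0 j) x / lam ord0 x.
have muM j x y : x \in G -> y \in G -> mu j (x * y)%g = mu j x * mu j y.
  move=> Gx Gy; have ea i : lam i (x * y)%g = lam i x * lam i y / alpha x y.
    by rewrite lamM // mulrC mulKf // a0.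
  rewrite /mu !ea; have := a0 x y Gx Gy; have := lam0 ord0 x Gx.
  have := lam0 ord0 y Gy; move=> h1 h2 h3; field.
  by rewrite h1 h2 h3.
have mu1 j : mu j 1%g = 1 by rewrite /mu !lam1 divr1.
have muX j x k : x \in G -> mu j (x ^+ k)%g = mu j x ^+ k.
  move=> Gx; elim: k => [|k IH]; first by rewrite expg0 mu1 expr0.
  by rewrite expgS muM ?groupX // IH exprS.
have muV j x : x \in G -> mu j x * mu j x^-1%g = 1.
  by move=> Gx; rewrite -muM ?groupV // mulgV mu1.
have mukey x : x \in G -> (forall j, mu j x = 1) -> x = 1%g.
  move=> Gx mux; apply: faith => //; apply/is_scalar_mxP; exists (lam ord0 x).
  have eD : D x = (lam ord0 x)%:M.
    case/diag_mxP: (Ddiag x Gx) => d ed; rewrite ed; apply/matrixP => i k; rewrite !mxE.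
    case: eqP => [ik|_]; last by rewrite !mulr0n.
    subst k.
    rewrite !mulr1n; have -> : d 0 i = lam i x by rewrite /lam ed mxE eqxx mulr1n.
    case: (unliftP ord0 i) => [j ->|-> //].
    have := mux j; rewrite /mu => /(congr1 (fun t => t * lam ord0 x)).
    by rewrite divfK ?lam0 // mul1r.
  have -> : rho x = invmx P *m D x *m P.
    by rewrite /D !mulmxA mulVmx // mul1mx mulmxKV.
  by rewrite eD mul_mx_scalar -scalemxAl mulVmx // scale_scalar_mx mulr1.
have cOG : abelian 'Ohm_1(G)%g by apply: abelianS (Ohm_sub 1 G) cGG.
have OhmP x : x \in 'Ohm_1(G)%g -> x \in G /\ (x ^+ p = 1)%g.
  rewrite (OhmEabelian pG cOG) !inE expn1 => /andP[-> /eqP //].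
have [z zP] := CC_prim_root (prime_gt0 pp).
pose rs := mkseq (fun k => z ^+ k) p.
have inrs t : t ^+ p = 1 -> t \in rs.
  move=> tp; have [i ->] := prim_rootP zP tp.
  by apply/mapP; exists (val i) => //; rewrite mem_iota add0n ltn_ord.
have [p' ep] : exists p', p = p'.+1 by exists p.-1; rewrite prednK ?prime_gt0.
pose Phi x : {ffun 'I_m -> 'I_p'.+1} := [ffun j => inord (index (mu j x) rs)].
have mup j x : x \in 'Ohm_1(G)%g -> mu j x ^+ p = 1.
  by case/OhmP=> Gx xp; rewrite -muX // xp mu1.
have Phi_inj : {in 'Ohm_1(G)%g &, injective Phi}.
  move=> x y Ox Oy ePhi.
  have [Gx _] := OhmP x Ox; have [Gy _] := OhmP y Oy.
  have ej j : mu j x = mu j y.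
    have := congr1 (fun f : {ffun 'I_m -> 'I_p'.+1} => val (f j)) ePhi; rewrite /= !ffunE.
    have ir t : t \in rs -> (index t rs < p'.+1)%N.
      by move=> trs; rewrite -ep -[X in (_ < X)%N](size_mkseq (fun k => z ^+ k)) index_mem.
    rewrite !inordK ?ir ?inrs ?mup // => ei.
    by rewrite -(nth_index 0 (inrs _ (mup j x Ox))) ei nth_index // inrs // mup.
  apply/eqP; rewrite eq_mulgV1; apply/eqP; apply: mukey; first by rewrite groupM ?groupV.
  by move=> j; rewrite muM ?groupV // ej muV.
have cardO : (#|'Ohm_1(G)%g| <= p ^ m)%N.
  rewrite -(card_in_imset Phi_inj); apply: leq_trans (max_card _) _.
  by rewrite card_ffun !card_ord ep.
rewrite (p_rank_abelian p cGG) -(leq_exp2l _ _ (prime_gt1 pp)).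
by rewrite -card_pgroup // (pgroupS (Ohm_sub 1 G) pG).
Qed.

End Lower.

Theorem lemma4p8 (gT : finGroupType) (G : {group gT}) (p n : nat) :
  prime p -> (p.-group G)%g -> abelian G -> (G :!=: 1)%g ->
  has_rank G n -> (n <= p - 1)%N ->
  tau_eq G n.+1.
Proof.
move=> pp pG cGG ntG hr np.
have nr := rank_eq cGG hr.
split.
  have [b defb tb] := abelian_structure cGG.
  have sb : size b = n by rewrite nr -size_abelian_type // -tb size_map.
  have [F [FM F0 Fk]] := chars_exist defb.
  rewrite -sb; exact: upper FM F0 Fk.
move=> m rho [alpha [coc rep]] faith.
have [g Gg ng] := trivgPn _ ntG.
case: m rho coc rep faith => [|m] rho coc rep faith.
  by have := faith g Gg; rewrite /is_scalar_mx insubF // => /(_ isT) e; rewrite e eqxx in ng.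
have np1 : (n.+1 <= p)%N by move: np (prime_gt0 pp); rewrite subn1 => h h0; rewrite -(prednK h0) ltnS.
case: (boolP [exists x in G, exists y in G, alpha x y != alpha y x]).
  case/exists_inP => x Gx /exists_inP [y Gy ne].
  have := caseA coc rep pp pG cGG Gx Gy ne.
  by move/(dvdn_leq (ltn0Sn m)); apply: leq_trans.
move=> H; have asym : {in G &, forall x y, alpha x y = alpha y x}.
  move=> x y Gx Gy; apply/eqP; apply: contraNT H => ne.
  by apply/exists_inP; exists x => //; apply/exists_inP; exists y.
have := caseB coc rep pp pG cGG faith asym.
by rewrite nr (rank_pgroup pG).
Qed.
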